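(* Let $\mu$ be a nonatomic positive Radon measure on $\mathbb{R}$ and $g\in\Lambda_\mu$. Then there is a constant $C$ such that for every triple $a<x<b$, \[|g(x)-g(a)|+|g(x)-g(b)|\le|g(a)-g(b)|+C\mu([a,b]),\] and for every bounded interval $[a,b]$ there is $C'$ such that $\sum_{j=1}^N|g(x_j)-g(x_{j-1})|\le C'\log(N+1)$ for every partition $a=x_0<\dots<x_N=b$.
   Context: For a nonatomic positive Radon measure $\mu$ on $\mathbb{R}$, $\Lambda_\mu$ is the class of continuous $g\colon\mathbb{R}\to\mathbb{R}$ for which there is $M>0$ with $|g(x+h)-2g(x)+g(x-h)|\le M\mu([x-h,x+h])$ for all $x\in\mathbb{R}$, $h\ge0$. *)

(* Defs.v *)
From Stdlib Require Import Reals Lra.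
Open Scope R_scope.

Definition rset := R -> Prop.

Definition open_set (U : rset) : Prop :=
  forall x, U x -> exists eps, 0 < eps /\ forall y, Rabs (y - x) < eps -> U y.

Inductive borel : rset -> Prop :=
| borel_open : forall U, open_set U -> borel U
| borel_compl : forall A, borel A -> borel (fun x => ~ A x)
| borel_union : forall A : nat -> rset,
    (forall n, borel (A n)) -> borel (fun x => exists n, A n x).

Definition bounded_set (A : rset) : Prop :=
  exists M, forall x, A x -> Rabs x <= M.

Definition cinterval (a b : R) : rset := fun x => a <= x <= b.

(* A positive Radon (= locally finite Borel) measure on R, recorded through
   its (finite, real) values on the delta-ring of bounded Borel sets; values
   on other sets are irrelevant. *)
Definition radon_measure (mu : rset -> R) : Prop :=
  (forall A, borel A -> bounded_set A -> 0 <= mu A) /\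
  mu (fun _ => False) = 0 /\
  (forall A : nat -> rset,
     (forall n, borel (A n)) ->
     (forall n m x, n <> m -> A n x -> A m x -> False) ->
     bounded_set (fun x => exists n, A n x) ->
     infinite_sum (fun n => mu (A n)) (mu (fun x => exists n, A n x))).

Definition nonatomic (mu : rset -> R) : Prop :=
  forall A, borel A -> bounded_set A -> 0 < mu A ->
    exists B, borel B /\ (forall x, B x -> A x) /\ 0 < mu B /\ mu B < mu A.

Definition Lambda (mu : rset -> R) (g : R -> R) : Prop :=
  continuity g /\
  exists M, 0 < M /\
    forall x h, 0 <= h ->
      Rabs (g (x + h) - 2 * g x + g (x - h)) <= M * mu (cinterval (x - h) (x + h)).

Fixpoint var_sum (g : R -> R) (xs : nat -> R) (N : nat) : R :=
  match N with
  | O => 0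
  | S n => var_sum g xs n + Rabs (g (xs (S n)) - g (xs n))
  end.

(* Main.v *)
Require Import Defs.
From Stdlib Require Import Reals Lra Lia Classical FunctionalExtensionality PropExtensionality.
Open Scope R_scope.

Lemma set_ext (A B : rset) : (forall x, A x <-> B x) -> A = B.
Proof. intros H; apply functional_extensionality; intros x; apply propositional_extensionality; apply H. Qed.

Lemma borel_union2 A B : borel A -> borel B -> borel (fun x => A x \/ B x).
Proof.
  intros HA HB.
  replace (fun x => A x \/ B x) with (fun x => exists n:nat, (match n with O => A | _ => B end) x).
  - apply borel_union. intros [|n]; assumption.
  - apply set_ext. intros x; split.
    + intros [[|n] H]; auto.
    + intros [H|H]; [exists O | exists 1%nat]; auto.
Qed.

Lemma open_gt v : Defs.open_set (fun x => v < x).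
Proof. intros x Hx. exists (x - v). split; [lra|]. intros y Hy. apply Rabs_def2 in Hy. lra. Qed.
Lemma open_lt v : Defs.open_set (fun x => x < v).
Proof. intros x Hx. exists (v - x). split; [lra|]. intros y Hy. apply Rabs_def2 in Hy. lra. Qed.

Lemma borel_cint u v : borel (cinterval u v).
Proof.
  replace (cinterval u v) with (fun x => ~ (fun y => y < u \/ v < y) x).
  - apply borel_compl. apply borel_union2; apply borel_open; [apply open_lt|apply open_gt].
  - apply set_ext; intros x; unfold cinterval; split; intros H.
    + destruct (Rlt_dec x u); destruct (Rlt_dec v x); try tauto; lra.
    + intros [H1|H1]; lra.
Qed.

Definition hoi (v w : R) : rset := fun x => v < x <= w.

Lemma borel_hoi v w : borel (hoi v w).
Proof.
  replace (hoi v w) with (fun x => ~ (fun y => ~ (v < y) \/ w < y) x).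
  - apply borel_compl. apply borel_union2; [apply borel_compl|]; apply borel_open; apply open_gt.
  - apply set_ext; intros x; unfold hoi; split; intros H.
    + destruct (Rlt_dec v x); destruct (Rlt_dec w x); try split; try tauto; lra.
    + destruct (Rlt_dec v x); destruct (Rlt_dec w x); try split; try tauto; lra.
Qed.

Lemma borel_empty : borel (fun _ => False).
Proof. apply borel_open. intros x []. Qed.

Lemma bounded_cint u v : bounded_set (cinterval u v).
Proof.
  exists (Rabs u + Rabs v). intros x [H1 H2].
  pose proof (Rle_abs u); pose proof (Rle_abs (-u)); pose proof (Rle_abs v); pose proof (Rle_abs (-v)).
  rewrite Rabs_Ropp in *. apply Rabs_le; lra.
Qed.

Lemma bounded_sub A B : bounded_set B -> (forall x, A x -> B x) -> bounded_set A.
Proof. intros [M HM] H. exists M. intros x Hx. apply HM, H, Hx. Qed.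

Lemma mu_add2 mu A B : radon_measure mu -> borel A -> borel B -> bounded_set A -> bounded_set B ->
  (forall x, A x -> B x -> False) -> mu (fun x => A x \/ B x) = mu A + mu B.
Proof.
  intros [Hpos [H0 Hadd]] HA HB bA bB Hd.
  set (S := fun n:nat => match n with O => A | 1%nat => B | _ => fun _ => False end).
  assert (Hs := Hadd S).
  assert (E : (fun x => exists n, S n x) = (fun x => A x \/ B x)).
  { apply set_ext; intros x; split.
    - intros [[|[|n]] H]; simpl in H; tauto.
    - intros [H|H]; [exists O|exists 1%nat]; exact H. }
  rewrite E in Hs.
  assert (Hs' : infinite_sum (fun n => mu (S n)) (mu (fun x => A x \/ B x))).
  { apply Hs.
    - intros [|[|n]]; simpl; auto using borel_empty.
    - intros [|[|n]] [|[|m]] x Hnm; simpl; intros; try tauto; try lia; eauto.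
    - destruct bA as [MA HMA]; destruct bB as [MB HMB]. exists (Rmax MA MB).
      intros x [H|H].
      + apply Rle_trans with MA; [auto | apply Rmax_l].
      + apply Rle_trans with MB; [auto | apply Rmax_r]. }
  apply (uniqueness_sum _ _ _ Hs').
  intros eps Heps. exists 1%nat. intros n Hn.
  assert (sum_f_R0 (fun n => mu (S n)) n = mu A + mu B).
  { induction n. lia. destruct n. simpl. reflexivity.
    rewrite tech5, IHn by lia. simpl. rewrite H0. ring. }
  rewrite H. unfold R_dist. rewrite Rminus_diag, Rabs_R0. exact Heps.
Qed.

Lemma mu_point mu v : radon_measure mu -> nonatomic mu -> mu (cinterval v v) = 0.
Proof.
  intros Hmu Hna. destruct Hmu as [Hpos [H0 _]].
  pose proof (Hpos _ (borel_cint v v) (bounded_cint v v)).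
  destruct (Rle_lt_or_eq_dec _ _ H) as [Hlt|Heq]; [|auto].
  destruct (Hna _ (borel_cint v v) (bounded_cint v v) Hlt) as [B [HB [Hsub [Hp Hl]]]].
  destruct (classic (B v)) as [Hv|Hv].
  - assert (B = cinterval v v).
    { apply set_ext; intros x; split; intros; auto. unfold cinterval in H1.
      replace x with v by lra. auto. }
    subst B. lra.
  - assert (B = fun _ => False).
    { apply set_ext; intros x; split; intros; [|tauto].
      apply Hsub in H1 as H2. unfold cinterval in H2. replace x with v in H1 by lra. auto. }
    subst B. lra.
Qed.

Lemma mu_split mu u v w : radon_measure mu -> nonatomic mu -> u <= v <= w ->
  mu (cinterval u w) = mu (cinterval u v) + mu (cinterval v w).
Proof.
  intros Hmu Hna Huvw.
  assert (E1 : cinterval u w = fun x => cinterval u v x \/ hoi v w x).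
  { apply set_ext; intros x; unfold cinterval, hoi; split; intros H.
    - destruct (Rle_dec x v); [left|right]; lra.
    - destruct H; lra. }
  assert (E2 : cinterval v w = fun x => cinterval v v x \/ hoi v w x).
  { apply set_ext; intros x; unfold cinterval, hoi; split; intros H.
    - destruct (Rle_dec x v); [left|right]; lra.
    - destruct H; lra. }
  assert (bh : bounded_set (hoi v w)).
  { apply bounded_sub with (cinterval v w). apply bounded_cint. unfold hoi, cinterval; intros; lra. }
  rewrite E1, E2, !mu_add2; auto using borel_cint, borel_hoi, bounded_cint;
    try (unfold cinterval, hoi; intros; lra).
  rewrite (mu_point mu v Hmu Hna). ring.
Qed.

Lemma mu_nonneg mu u v : radon_measure mu -> 0 <= mu (cinterval u v).
Proof. intros [H _]. apply H; auto using borel_cint, bounded_cint. Qed.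

Lemma chord_max (G : R -> R) (a b K : R) : a < b ->
  (forall t, a <= t <= b -> continuity_pt G t) -> G a = 0 -> G b = 0 ->
  (forall y h, 0 <= h -> a <= y - h -> y + h <= b -> Rabs (G (y+h) - 2 * G y + G (y-h)) <= K) ->
  forall x, a <= x <= b -> G x <= K.
Proof.
  intros Hab Hc Ga Gb H2 x Hx.
  destruct (continuity_ab_maj G a b (Rlt_le _ _ Hab) Hc) as [x0 [Hmax Hx0]].
  assert (Gx := Hmax x Hx).
  destruct (Rle_dec (x0 - a) (b - x0)) as [H1|H1].
  - specialize (H2 x0 (x0 - a)). replace (x0 - (x0-a)) with a in H2 by ring.
    specialize (H2 ltac:(lra) ltac:(lra) ltac:(lra)).
    rewrite Ga in H2. assert (G (x0 + (x0-a)) <= G x0) by (apply Hmax; lra).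
    pose proof (Rle_abs (-(G (x0 + (x0 - a)) - 2 * G x0 + 0))). rewrite Rabs_Ropp in H0. lra.
  - specialize (H2 x0 (b - x0)). replace (x0 + (b-x0)) with b in H2 by ring.
    specialize (H2 ltac:(lra) ltac:(lra) ltac:(lra)).
    rewrite Gb in H2. assert (G (x0 - (b-x0)) <= G x0) by (apply Hmax; lra).
    pose proof (Rle_abs (-(0 - 2 * G x0 + G (x0 - (b - x0))))). rewrite Rabs_Ropp in H0. lra.
Qed.

Lemma part1 (mu : rset -> R) (g : R -> R) (M : R)
  (Hmu : radon_measure mu) (Hna : nonatomic mu) (Hc : continuity g) (HM : 0 < M)
  (H2 : forall x h, 0 <= h ->
      Rabs (g (x + h) - 2 * g x + g (x - h)) <= M * mu (cinterval (x - h) (x + h))) :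
  forall a x b : R, a < x < b ->
      Rabs (g x - g a) + Rabs (g x - g b) <= Rabs (g a - g b) + (2 * M) * mu (cinterval a b).
Proof.
  intros a x b Hx.
  set (s := (g b - g a) / (b - a)).
  set (G := fun t => g t - (g a + s * (t - a))).
  set (K := M * mu (cinterval a b)).
  assert (HK2 : forall (G' : R -> R), (forall t, G' t = G t \/ G' t = - G t) ->
     (forall y h, Rabs (G' (y+h) - 2 * G' y + G' (y-h)) = Rabs (g (y+h) - 2 * g y + g (y-h))) ->
     forall y h, 0 <= h -> a <= y - h -> y + h <= b -> Rabs (G' (y+h) - 2 * G' y + G' (y-h)) <= K).
  { intros G' _ HG' y h Hh Hl Hr. rewrite HG'. eapply Rle_trans; [apply H2; exact Hh|].
    unfold K. apply Rmult_le_compat_l; [lra|].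
    rewrite (mu_split mu a (y-h) b) by (auto; lra).
    rewrite (mu_split mu (y-h) (y+h) b) by (auto; lra).
    pose proof (mu_nonneg mu a (y-h) Hmu). pose proof (mu_nonneg mu (y+h) b Hmu). lra. }
  assert (Hcont : continuity G).
  { unfold G. apply continuity_minus; [exact Hc|]. apply continuity_plus.
    apply continuity_const; intros ? ?; reflexivity.
    apply continuity_scal. apply continuity_minus. apply derivable_continuous, derivable_id.
    apply continuity_const; intros ? ?; reflexivity. }
  assert (Ga : G a = 0) by (unfold G; ring).
  assert (Gb : G b = 0) by (unfold G, s; field; lra).
  assert (B1 : G x <= K).
  { apply (chord_max G a b K); try lra; auto.
    apply HK2. intros; auto. intros y h. f_equal. unfold G; ring. }
  assert (B2 : - G x <= K).
  { apply (chord_max (fun t => - G t) a b K); try lra.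
    intros t _. apply continuity_pt_opp, Hcont.
    intros y h. apply (HK2 (fun t => - G t)). intros; auto. clear y h. intros y h.
    replace (- G (y + h) - 2 * - G y + - G (y - h)) with (- (g (y + h) - 2 * g y + g (y - h))) by (unfold G; ring).
    apply Rabs_Ropp. }
  set (t := (x - a) / (b - a)).
  assert (Ht : 0 < t < 1).
  { unfold t. split. apply Rdiv_lt_0_compat; lra.
    apply (Rmult_lt_reg_r (b - a)); [lra|]. unfold Rdiv. rewrite Rmult_assoc, Rinv_l by lra. lra. }
  set (D := g b - g a).
  assert (E1 : g x - g a = t * D + G x) by (unfold G, t, D, s; field; lra).
  assert (E2 : g x - g b = (t - 1) * D + G x) by (unfold G, t, D, s; field; lra).
  rewrite E1, E2, Rabs_minus_sym.
  fold D.
  pose proof (Rabs_triang (t*D) (G x)). pose proof (Rabs_triang ((t-1)*D) (G x)).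
  rewrite Rabs_mult, (Rabs_pos_eq t) in H by lra.
  rewrite Rabs_mult, (Rabs_left1 (t-1)) in H0 by lra.
  assert (Rabs (G x) <= K) by (apply Rabs_le; lra).
  unfold K in H1. nra.
Qed.

Definition remove (xs : nat -> R) (i : nat) : nat -> R :=
  fun k => if (k <=? i)%nat then xs k else xs (S k).

Lemma remove_lo xs i k : (k <= i)%nat -> remove xs i k = xs k.
Proof. intros H. unfold remove. rewrite (proj2 (Nat.leb_le _ _) H). reflexivity. Qed.
Lemma remove_hi xs i k : (i < k)%nat -> remove xs i k = xs (S k).
Proof. intros H. unfold remove. rewrite (proj2 (Nat.leb_gt _ _) H). reflexivity. Qed.

Lemma var_sum_S g xs n : var_sum g xs (S n) = var_sum g xs n + Rabs (g (xs (S n)) - g (xs n)).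
Proof. reflexivity. Qed.

Lemma var_remove g xs N i : (i < N)%nat ->
  var_sum g xs (S N) = var_sum g (remove xs i) N +
    (Rabs (g (xs (S i)) - g (xs i)) + Rabs (g (xs (S (S i))) - g (xs (S i)))
     - Rabs (g (xs (S (S i))) - g (xs i))).
Proof.
  intros HiN.
  assert (A : forall n, (n <= i)%nat -> var_sum g (remove xs i) n = var_sum g xs n).
  { induction n; intros Hn. reflexivity.
    rewrite !var_sum_S, IHn by lia. rewrite !remove_lo by lia. reflexivity. }
  assert (B : var_sum g (remove xs i) (S i) = var_sum g xs i + Rabs (g (xs (S (S i))) - g (xs i))).
  { rewrite var_sum_S, A by lia. rewrite remove_hi, remove_lo by lia. reflexivity. }
  assert (C : forall d, var_sum g xs (S (S i + d)) - var_sum g (remove xs i) (S i + d)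
                   = var_sum g xs (S (S i)) - var_sum g (remove xs i) (S i)).
  { induction d. rewrite Nat.add_0_r. reflexivity.
    rewrite Nat.add_succ_r. rewrite (var_sum_S g xs (S (S i + d))), (var_sum_S g (remove xs i) (S i + d)).
    rewrite (remove_hi xs i (S (S i + d))), (remove_hi xs i (S i + d)) by lia. lra. }
  specialize (C (N - S i)%nat). replace (S i + (N - S i))%nat with N in C by lia.
  rewrite (var_sum_S g xs (S i)), (var_sum_S g xs i) in C. rewrite B in C. lra.
Qed.

Lemma xs_mono (xs : nat -> R) N : (forall j, (j < N)%nat -> xs j < xs (S j)) ->
  forall i k, (i <= k <= N)%nat -> xs i <= xs k.
Proof.
  intros H i k. induction k; intros Hk.
  - replace i with 0%nat by lia. lra.
  - destruct (Nat.eq_dec i (S k)). subst; lra.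
    specialize (IHk ltac:(lia)). specialize (H k ltac:(lia)). lra.
Qed.

Lemma ln_step n : 1 <= n -> 1 / (3 * n) <= ln (n + 1) - ln n.
Proof.
  intros Hn.
  assert (Hz : ln (n / (n+1)) <= n / (n+1) - 1).
  { pose proof (exp_ineq1_le (n/(n+1) - 1)).
    assert (0 < n / (n+1)) by (apply Rdiv_lt_0_compat; lra).
    destruct (Rle_lt_or_eq_dec _ _ H) as [Hl|He].
    - left. rewrite <- (ln_exp (n / (n+1) - 1)). apply ln_increasing; lra.
    - right. assert (Hq : n/(n+1) = exp (n/(n+1)-1)) by lra. rewrite Hq at 1. rewrite ln_exp. reflexivity. }
  unfold Rdiv in Hz. rewrite ln_mult, ln_Rinv in Hz by (try apply Rinv_0_lt_compat; lra).
  assert (n / (n+1) - 1 = - (1 / (n+1))) by (field; lra).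
  assert (1 / (3 * n) <= 1 / (n+1)).
  { apply Rmult_le_reg_r with (3 * n * (n+1)). nra.
    replace (1 / (3 * n) * (3 * n * (n + 1))) with (n+1) by (field; lra).
    replace (1 / (n+1) * (3 * n * (n + 1))) with (3*n) by (field; lra). lra. }
  lra.
Qed.

Lemma exists_small (mu : rset -> R) (Hmu : radon_measure mu) (Hna : nonatomic mu)
  (xs : nat -> R) (N : nat) : (1 <= N)%nat ->
  (forall j, (j < S N)%nat -> xs j < xs (S j)) ->
  exists i, (i < N)%nat /\
    mu (cinterval (xs i) (xs (S (S i)))) <= 2 * mu (cinterval (xs 0%nat) (xs (S N))) / INR N.
Proof.
  intros HN Hinc.
  pose proof (xs_mono xs (S N) Hinc) as Hm.
  set (c := 2 * mu (cinterval (xs 0%nat) (xs (S N))) / INR N).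
  apply NNPP. intros Hne.
  assert (Hall : forall i, (i < N)%nat -> c < mu (cinterval (xs i) (xs (S (S i))))).
  { intros i Hi. apply Rnot_le_lt. intros Hle. apply Hne. exists i. auto. }
  assert (Ind : forall n, (S n <= N)%nat ->
     mu (cinterval (xs 0%nat) (xs (S (S n)))) + mu (cinterval (xs 1%nat) (xs (S n))) > INR (S n) * c).
  { induction n; intros Hn.
    - rewrite mu_point by auto. specialize (Hall 0%nat ltac:(lia)). simpl. lra.
    - specialize (IHn ltac:(lia)). specialize (Hall (S n) ltac:(lia)).
      rewrite (mu_split mu (xs (S n)) (xs (S (S n))) (xs (S (S (S n))))) in Hall
        by (auto; split; apply Hm; lia).
      rewrite (mu_split mu (xs 0%nat) (xs (S (S n))) (xs (S (S (S n))))) by (auto; split; apply Hm; lia).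
      rewrite (mu_split mu (xs 1%nat) (xs (S n)) (xs (S (S n)))) by (auto; split; apply Hm; lia).
      rewrite (S_INR (S n)). lra. }
  destruct N as [|N']. lia.
  specialize (Ind N' ltac:(lia)).
  assert (INR (S N') * c = 2 * mu (cinterval (xs 0%nat) (xs (S (S N'))))).
  { unfold c. field. apply not_0_INR. lia. }
  rewrite H in Ind.
  rewrite (mu_split mu (xs 0%nat) (xs 1%nat) (xs (S (S N')))) in Ind by (auto; split; apply Hm; lia).
  rewrite (mu_split mu (xs 1%nat) (xs (S N')) (xs (S (S N')))) in Ind by (auto; split; apply Hm; lia).
  pose proof (mu_nonneg mu (xs 0%nat) (xs 1%nat) Hmu).
  pose proof (mu_nonneg mu (xs (S N')) (xs (S (S N'))) Hmu).
  lra.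
Qed.

Lemma part2_core (mu : rset -> R) (g : R -> R) (C1 : R)
  (Hmu : radon_measure mu) (Hna : nonatomic mu) (HC1 : 0 < C1)
  (HP1 : forall a x b : R, a < x < b ->
      Rabs (g x - g a) + Rabs (g x - g b) <= Rabs (g a - g b) + C1 * mu (cinterval a b)) :
  forall N, (1 <= N)%nat -> forall xs, (forall j, (j < N)%nat -> xs j < xs (S j)) ->
  var_sum g xs N <= Rabs (g (xs 0%nat) - g (xs N))
                    + 3 * (2 * C1 * mu (cinterval (xs 0%nat) (xs N))) * ln (INR N).
Proof.
  induction N as [|N IH]; intros HN xs Hinc. lia.
  destruct (Nat.eq_dec N 0) as [->|HN0].
  - simpl. rewrite ln_1, Rabs_minus_sym. lra.
  - destruct (exists_small mu Hmu Hna xs N ltac:(lia) Hinc) as [i [Hi Hm]].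
    set (ys := remove xs i).
    assert (Hys : forall j, (j < N)%nat -> ys j < ys (S j)).
    { intros j Hj. unfold ys.
      destruct (Compare_dec.lt_eq_lt_dec j i) as [[Hl|He]|Hg].
      - rewrite !remove_lo by lia. apply Hinc; lia.
      - subst j. rewrite remove_lo, remove_hi by lia.
        pose proof (Hinc i ltac:(lia)); pose proof (Hinc (S i) ltac:(lia)); lra.
      - rewrite !remove_hi by lia. apply Hinc; lia. }
    specialize (IH ltac:(lia) ys Hys).
    assert (E0 : ys 0%nat = xs 0%nat) by (unfold ys; apply remove_lo; lia).
    assert (EN : ys N = xs (S N)) by (unfold ys; apply remove_hi; lia).
    rewrite E0, EN in IH.
    rewrite (var_remove g xs N i Hi). fold ys.
    pose proof (Hinc i ltac:(lia)); pose proof (Hinc (S i) ltac:(lia)).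
    specialize (HP1 (xs i) (xs (S i)) (xs (S (S i))) ltac:(lra)).
    rewrite (Rabs_minus_sym (g (xs (S i))) (g (xs (S (S i))))) in HP1.
    rewrite (Rabs_minus_sym (g (xs i)) (g (xs (S (S i))))) in HP1.
    set (T := mu (cinterval (xs 0%nat) (xs (S N)))) in *.
    set (m := mu (cinterval (xs i) (xs (S (S i))))) in *.
    assert (HT : 0 <= T) by (apply mu_nonneg; auto).
    assert (HNr : 1 <= INR N) by (apply (le_INR 1); lia).
    pose proof (ln_step (INR N) HNr) as Hl.
    rewrite S_INR.
    assert (Hb : C1 * m <= 3 * (2 * C1 * T) * (1 / (3 * INR N))).
    { replace (3 * (2 * C1 * T) * (1 / (3 * INR N))) with (C1 * (2 * T / INR N)) by (field; lra).
      apply Rmult_le_compat_l; lra. }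
    assert (Hc : 3 * (2 * C1 * T) * (1 / (3 * INR N)) <= 3 * (2 * C1 * T) * (ln (INR N + 1) - ln (INR N))).
    { apply Rmult_le_compat_l; [|exact Hl]. nra. }
    lra.
Qed.

Theorem mainTheorem11 (mu : rset -> R) (g : R -> R)
  (Hmu : radon_measure mu) (Hna : nonatomic mu) (Hg : Lambda mu g) :
  (exists C : R, forall a x b : R, a < x < b ->
      Rabs (g x - g a) + Rabs (g x - g b) <= Rabs (g a - g b) + C * mu (cinterval a b))
  /\
  (forall a b : R, exists C' : R, forall (N : nat) (xs : nat -> R),
      xs 0%nat = a -> xs N = b ->
      (forall j, (j < N)%nat -> xs j < xs (S j)) ->
      var_sum g xs N <= C' * ln (INR N + 1)).
Proof.
  destruct Hg as [Hc [M [HM H2]]].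
  pose proof (part1 mu g M Hmu Hna Hc HM H2) as HP1.
  split. { exists (2 * M). exact HP1. }
  intros a b.
  set (c := 2 * (2 * M) * mu (cinterval a b)).
  assert (Hc0 : 0 <= c) by (unfold c; pose proof (mu_nonneg mu a b Hmu); nra).
  pose proof ln_lt_2 as Hl2.
  exists (Rabs (g a - g b) / ln 2 + 3 * c).
  intros N xs H0 HN Hinc.
  destruct N as [|N'].
  - simpl. replace (0 + 1) with 1 by ring. rewrite ln_1. lra.
  - pose proof (part2_core mu g (2 * M) Hmu Hna ltac:(lra) HP1 (S N') ltac:(lia) xs Hinc) as Hq.
    rewrite H0, HN in Hq. fold c in Hq.
    assert (HNr : 1 <= INR (S N')) by (apply (le_INR 1); lia).
    assert (Hlog1 : ln (INR (S N')) <= ln (INR (S N') + 1)).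
    { left. apply ln_increasing; lra. }
    assert (Hlog2 : ln 2 <= ln (INR (S N') + 1)).
    { destruct (Rle_lt_or_eq_dec 2 (INR (S N') + 1)) as [Hl|He]; [lra| |].
      left; apply ln_increasing; lra. rewrite He; lra. }
    assert (Ha : Rabs (g a - g b) <= Rabs (g a - g b) / ln 2 * ln (INR (S N') + 1)).
    { replace (Rabs (g a - g b) / ln 2 * ln (INR (S N') + 1))
        with (Rabs (g a - g b) * (ln (INR (S N') + 1) / ln 2)) by (field; lra).
      rewrite <- (Rmult_1_r (Rabs (g a - g b))) at 1.
      apply Rmult_le_compat_l. apply Rabs_pos.
      apply (Rmult_le_reg_r (ln 2)). lra. unfold Rdiv. rewrite Rmult_assoc, Rinv_l by lra. lra. }
    assert (Hb : 3 * c * ln (INR (S N')) <= 3 * c * ln (INR (S N') + 1)).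
    { apply Rmult_le_compat_l; lra. }
    lra.
Qed.
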